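(* Let $R>0$ and let $f\colon\mathbb{R}\to(0,\infty)$ be a continuously differentiable convex function. Put $\alpha(t)=\dfrac{tf'(t)-f(t)}{\sqrt{1+f'(t)^2}}$ and $C^+=\{t>0\mid\alpha(t)\ge R\}$. Then either $C^+=\emptyset$, or $t_0^+:=\inf C^+>0$ and $C^+=[t_0^+,\infty)$. *)

(* Defs.v *)
From Stdlib Require Import Reals.
From Coquelicot Require Import Coquelicot.
Open Scope R_scope.

Definition convex_fun (f : R -> R) : Prop :=
  forall x y l, 0 <= l <= 1 ->
    f (l * x + (1 - l) * y) <= l * f x + (1 - l) * f y.

Definition cont_diff (f : R -> R) : Prop :=
  (forall t, ex_derive f t) /\ (forall t, continuous (Derive f) t).

Definition alpha (f : R -> R) (t : R) : R :=
  (t * Derive f t - f t) / sqrt (1 + (Derive f t) ^ 2).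

Definition C_plus_set (f : R -> R) (Rad : R) (t : R) : Prop :=
  0 < t /\ alpha f t >= Rad.

Definition is_inf (E : R -> Prop) (m : R) : Prop :=
  (forall x, E x -> m <= x) /\ (forall b, (forall x, E x -> b <= x) -> b <= m).

(* Main.v *)
Require Import Defs.
From Stdlib Require Import Reals Lra Classical.
From Coquelicot Require Import Coquelicot.
Open Scope R_scope.

Lemma tangent (f : R -> R) (hd : forall t, ex_derive f t) (hconv : convex_fun f) x y :
  f y >= f x + Derive f x * (y - x).
Proof.
destruct (Req_dec y x) as [->|Hyx]; [lra|].
apply Rnot_lt_ge; intro H.
assert (Hl := proj1 (is_derive_Reals _ _ _) (Derive_correct _ _ (hd x))).
set (l := Derive f x) in *. set (d := y - x) in *.
assert (Hd : Rabs d > 0) by (apply Rabs_pos_lt; unfold d; lra).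
set (eps := (l*d - (f y - f x)) / Rabs d).
assert (Heps : 0 < eps) by (unfold eps; apply Rdiv_lt_0_compat; lra).
assert (Hepsd : eps * Rabs d = l*d - (f y - f x)) by (unfold eps; field; lra).
destruct (Hl eps Heps) as [[delta Hdel] Hlim].
set (k := Rmin 1 (delta / 2 / Rabs d)).
assert (Hk0 : 0 < k) by (unfold k; apply Rmin_pos; [lra| apply Rdiv_lt_0_compat; lra]).
assert (Hk1 : k <= 1) by (unfold k; apply Rmin_l).
assert (Hk2 : k <= delta / 2 / Rabs d) by (unfold k; apply Rmin_r).
assert (Hh : Rabs (k * d) = k * Rabs d) by (rewrite Rabs_mult, Rabs_pos_eq; lra).
assert (Hkd : k * Rabs d < delta).
{ apply Rle_lt_trans with (delta / 2 / Rabs d * Rabs d).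
  - apply Rmult_le_compat_r; lra.
  - replace (delta / 2 / Rabs d * Rabs d) with (delta/2) by (field; lra). lra. }
assert (Hne : k * d <> 0).
{ intro E. rewrite E, Rabs_R0 in Hh. nra. }
simpl in Hlim. specialize (Hlim (k*d) Hne ltac:(rewrite Hh; lra)).
assert (Hc := hconv y x k ltac:(lra)).
replace (k * y + (1 - k) * x) with (x + k * d) in Hc by (unfold d; ring).
assert (E : Rabs ((f (x + k * d) - f x) / (k * d) - l) * Rabs (k*d)
          = Rabs (f (x + k * d) - f x - l * (k*d))).
{ rewrite <- Rabs_mult. f_equal. field. split; intro Z; apply Hne; rewrite Z; ring. }
rewrite Hh in E.
assert (Hb : Rabs (f (x + k * d) - f x - l * (k*d)) < eps * (k * Rabs d)).
{ rewrite <- E. apply Rmult_lt_compat_r; [nra|exact Hlim]. }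
assert (Hb2 := Rle_abs (- (f (x + k * d) - f x - l * (k*d)))).
rewrite Rabs_Ropp in Hb2.
nra.
Qed.

Lemma mono (Rad : R) (f : R -> R) (hR : 0 < Rad) (hpos : forall t, 0 < f t)
  (hd : forall t, ex_derive f t) (hconv : convex_fun f) t s :
  0 < t -> alpha f t >= Rad -> t <= s -> t > Rad /\ alpha f s >= Rad.
Proof.
intros Ht Ha Hts. unfold alpha in *.
set (p := Derive f t) in *. set (q := Derive f s) in *.
assert (Hp2 : 0 <= 1 + p^2) by nra. assert (Hq2 : 0 <= 1 + q^2) by nra.
assert (Sp2 := sqrt_sqrt _ Hp2). assert (Sq2 := sqrt_sqrt _ Hq2).
set (Sp := sqrt (1 + p^2)) in *. set (Sq := sqrt (1 + q^2)) in *.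
assert (HSp : 0 < Sp) by (apply sqrt_lt_R0; nra).
assert (HSq : 0 < Sq) by (apply sqrt_lt_R0; nra).
assert (Hg : t * p - f t >= Rad * Sp).
{ apply Rle_ge. apply Rge_le in Ha.
  replace (t * p - f t) with ((t * p - f t) / Sp * Sp) by (field; lra).
  apply Rmult_le_compat_r; lra. }
assert (HpSp : p < Sp) by nra.
assert (Hft := hpos t). assert (Hfs := hpos s).
assert (Hpp : 0 < p) by nra.
assert (HtR : t > Rad) by nra.
split; [exact HtR|].
assert (T1 := tangent f hd hconv s t). assert (T2 := tangent f hd hconv t s).
fold p q in T1, T2.
assert (Hqp : p <= q).
{ destruct (Req_dec s t) as [E|E]. - unfold q; rewrite E; fold p; lra. - nra. }
assert (HSq' : Sq <= Sp + (q - p)) by nra.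
assert (Hgs : s * q - f s >= Rad * Sq) by nra.
apply Rle_ge. replace Rad with (Rad * Sq / Sq) by (field; lra).
unfold Rdiv. apply Rmult_le_compat_r. left; apply Rinv_0_lt_compat; lra. lra.
Qed.

Lemma alpha_cont (f : R -> R) (hC1 : cont_diff f) x : continuity_pt (alpha f) x.
Proof.
destruct hC1 as [hd hc].
apply continuity_pt_filterlim.
unfold alpha, Rdiv.
apply (continuous_mult (fun y => y * Derive f y - f y) (fun y => / sqrt (1 + Derive f y ^ 2))).
- apply (continuous_minus (fun y => y * Derive f y) f).
  + apply (continuous_mult (fun y => y) (Derive f)). apply continuous_id. apply hc.
  + apply ex_derive_continuous, hd.
- apply continuous_Rinv_comp.
  + apply continuous_sqrt_comp.
    apply (continuous_plus (fun _ => 1) (fun y => Derive f y ^ 2)). apply continuous_const.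
    apply (continuous_mult (Derive f) (fun y => Derive f y ^ 1)). apply hc.
    apply (continuous_mult (Derive f) (fun y => 1)). apply hc. apply continuous_const.
  + apply Rgt_not_eq, sqrt_lt_R0. nra.
Qed.

Theorem corollary9 (Rad : R) (f : R -> R)
  (hR : 0 < Rad) (hpos : forall t, 0 < f t)
  (hC1 : cont_diff f) (hconv : convex_fun f) :
  (forall t, ~ C_plus_set f Rad t) \/
  (exists t0, is_inf (C_plus_set f Rad) t0 /\ 0 < t0 /\
     forall t, C_plus_set f Rad t <-> t0 <= t).
Proof.
assert (hd := proj1 hC1).
destruct (Classical_Prop.classic (exists t, C_plus_set f Rad t)) as [[t1 Ht1]|N].
2:{ left. intros t Ht. apply N. exists t. exact Ht. }
right.
assert (Hb : bound (fun x => C_plus_set f Rad (-x))).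
{ exists 0. intros x [Hx _]. lra. }
destruct (completeness _ Hb) as [m [Hm1 Hm2]].
{ exists (-t1). rewrite Ropp_involutive. exact Ht1. }
assert (Hinf : is_inf (C_plus_set f Rad) (-m)).
{ split.
  - intros x Hx. assert (-x <= m). apply Hm1. rewrite Ropp_involutive. exact Hx. lra.
  - intros b Hbnd. assert (m <= -b). apply Hm2. intros x Hx. specialize (Hbnd _ Hx). lra. lra. }
assert (HgtR : forall x, C_plus_set f Rad x -> x > Rad).
{ intros x [Hx Ha]. exact (proj1 (mono Rad f hR hpos hd hconv x x Hx Ha (Rle_refl _))). }
assert (Ht0 : Rad <= -m).
{ apply (proj2 Hinf). intros x Hx. left. apply HgtR, Hx. }
assert (Hin : C_plus_set f Rad (-m)).
{ split; [lra|]. apply Rnot_lt_ge. intro Hlt.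
  assert (Hc := alpha_cont f hC1 (-m)).
  unfold continuity_pt, continue_in, limit1_in, limit_in in Hc.
  destruct (Hc (Rad - alpha f (-m)) ltac:(lra)) as [delta [Hdel Hd]].
  destruct (Classical_Prop.classic (exists x, C_plus_set f Rad x /\ x < -m + delta)) as [[x [Hx Hxl]]|N].
  - assert (Hxm : -m <= x) by (apply (proj1 Hinf), Hx).
    assert (Hdist : Rabs (x - - m) < delta) by (rewrite Rabs_pos_eq; lra).
    destruct (Req_dec x (-m)) as [Exm|Exm].
    { rewrite Exm in Hx. destruct Hx as [_ Hx]. lra. }
    assert (Hdx := Hd x (conj (conj I (not_eq_sym Exm)) Hdist)).
    simpl in Hdx. unfold Rdist in Hdx.
    assert (Hr := Rle_abs (alpha f x - alpha f (-m))).
    destruct Hx as [_ Hx]. lra.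
  - assert (-m + delta <= -m); [|lra].
    apply (proj2 Hinf). intros x Hx. apply Rnot_lt_le. intro Hl. apply N. exists x. auto. }
exists (-m). split; [exact Hinf|]. split; [lra|].
intros t. split.
- intros Ht. apply (proj1 Hinf), Ht.
- intros Ht. destruct Hin as [H0 Ha]. split; [lra|].
  exact (proj2 (mono Rad f hR hpos hd hconv (-m) t H0 Ha Ht)).
Qed.
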